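(* For every integer $n\ge 0$, \[ (p_{1,5}+p_{4,5})(n) = M+\sum_{k=1}^\infty (-1)^{k+1}\big( (p_{1,5}+p_{4,5})(n-P_{7,k})+(p_{1,5}+p_{4,5})(n-Q_{7,k})\big), \] where $P_{7,k}=\frac{k(5k-3)}{2}$, $Q_{7,k}=\frac{k(5k+3)}{2}$, and \[ M = \begin{cases} (-1)^m, &\text{if } n=5P_{5,m}\text{ or }n=5Q_{5,m}\text{ for some }m\in\mathbb{N}_0, \\ 0, & \text{otherwise,} \end{cases} \] with $P_{5,m}=\frac{m(3m-1)}{2}$, $Q_{5,m}=\frac{m(3m+1)}{2}$.
   Context: $(p_{1,5}+p_{4,5})(n)$ denotes the number of partitions of $n$ in which every part is congruent to $1$ or to $4$ modulo $5$; it equals $1$ for $n=0$ and is set to $0$ for $n\notin\mathbb{N}_0$. $\mathbb{N}_0=\{0,1,2,\dots\}$. *)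

(* Defs.v *)
From mathcomp Require Import all_boot all_order all_algebra.
Set Implicit Arguments. Unset Strict Implicit. Unset Printing Implicit Defensive.
Import GRing.Theory Num.Theory.

Definition good_part (i : nat) : bool := (i %% 5 == 1) || (i %% 5 == 4).

(* A partition of n is encoded by its multiplicity function m : i |-> number
   of parts equal to i (for 0 <= i <= n; every multiplicity is <= n). *)
Definition part145_set (n : nat) : {set {ffun 'I_n.+1 -> 'I_n.+1}} :=
  [set m : {ffun 'I_n.+1 -> 'I_n.+1} |
     (\sum_(i < n.+1) (i : nat) * (m i : nat) == n)%N
     && [forall i, (m i != ord0) ==> good_part i]].

Definition p145 (n : nat) : nat := #|part145_set n|.

Definition p145z (z : int) : int :=
  match z with Posz n => (p145 n)%:Z | Negz _ => 0%R end.

Definition P7 (k : nat) : nat := (k * (5 * k - 3)) %/ 2.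
Definition Q7 (k : nat) : nat := (k * (5 * k + 3)) %/ 2.
Definition P5 (m : nat) : nat := (m * (3 * m - 1)) %/ 2.
Definition Q5 (m : nat) : nat := (m * (3 * m + 1)) %/ 2.

Definition is_M (n : nat) (M : int) : Prop :=
  (forall m : nat, (n = 5 * P5 m \/ n = 5 * Q5 m)%N -> M = ((-1) ^+ m)%R) /\
  ((~ exists m : nat, (n = 5 * P5 m \/ n = 5 * Q5 m)%N) -> M = 0%R).

(* Main.v *)
Require Import Defs.
From mathcomp Require Import all_boot all_order all_algebra.
Import GRing.Theory Num.Theory.
Local Open Scope ring_scope.
From mathcomp Require Import zify ring.

Set Implicit Arguments. Unset Strict Implicit. Unset Printing Implicit Defensive.

Notation P := {poly int}.

Definition cg (T : nat) (p q : P) := exists r : P, p = q + 'X^T * r.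

Lemma cg_refl T p : cg T p p.
Proof. by exists 0; rewrite mulr0 addr0. Qed.

Lemma cg_sym T p q : cg T p q -> cg T q p.
Proof. by case=> r ->; exists (- r); rewrite mulrN addrK. Qed.

Lemma cg_trans T p q s : cg T p q -> cg T q s -> cg T p s.
Proof. by case=> r -> [r' ->]; exists (r' + r); rewrite mulrDr addrA. Qed.

Lemma cgD T p q p' q' : cg T p q -> cg T p' q' -> cg T (p + p') (q + q').
Proof. by case=> r -> [r' ->]; exists (r + r'); ring. Qed.

Lemma cgN T p q : cg T p q -> cg T (- p) (- q).
Proof. by case=> r ->; exists (- r); ring. Qed.

Lemma cgM T p q p' q' : cg T p q -> cg T p' q' -> cg T (p * p') (q * q').
Proof. by case=> r -> [r' ->]; exists (r * q' + q * r' + 'X^T * r * r'); ring. Qed.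

Lemma cgMl T c p q : cg T p q -> cg T (c * p) (c * q).
Proof. by move=> h; apply: cgM (cg_refl _ _) h. Qed.

Lemma cg_le T T' p q : (T' <= T)%N -> cg T p q -> cg T' p q.
Proof.
move=> le [r ->]; exists ('X^(T - T') * r).
by rewrite mulrA -exprD subnKC.
Qed.

Lemma cgX0 T e : (T <= e)%N -> cg T 'X^e 0.
Proof. by move=> le; exists 'X^(e - T); rewrite add0r -exprD subnKC. Qed.

Lemma cg_coef T p q i : cg T p q -> (i < T)%N -> p`_i = q`_i.
Proof. by case=> r -> lt; rewrite coefD coefXnM lt addr0. Qed.

Lemma cg_sum T m n (F G : nat -> P) :
  (forall i, (m <= i < n)%N -> cg T (F i) (G i)) ->
  cg T (\sum_(m <= i < n) F i) (\sum_(m <= i < n) G i).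
Proof.
move=> h; rewrite !big_seq; apply: big_ind2; first exact: cg_refl.
  by move=> *; apply: cgD.
by move=> i; rewrite mem_index_iota => /h.
Qed.

Lemma cg_prod T m n (F G : nat -> P) :
  (forall i, (m <= i < n)%N -> cg T (F i) (G i)) ->
  cg T (\prod_(m <= i < n) F i) (\prod_(m <= i < n) G i).
Proof.
move=> h; rewrite !big_seq; apply: big_ind2; first exact: cg_refl.
  by move=> *; apply: cgM.
by move=> i; rewrite mem_index_iota => /h.
Qed.

Lemma cg_tail T m (F : nat -> P) :
  (forall i, (T <= i)%N -> cg T (F i) 1) -> (T <= m)%N ->
  cg T (\prod_(0 <= i < m) F i) (\prod_(0 <= i < T) F i).
Proof.
move=> h; elim: m => [|m IH]; first by rewrite leqn0 => /eqP ->; exact: cg_refl.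
rewrite leq_eqVlt => /orP[/eqP <-|lt]; first exact: cg_refl.
rewrite big_nat_recr //=; rewrite -[X in cg _ _ X]mulr1.
by apply: cgM (IH lt) (h _ lt).
Qed.

Lemma cg_shift T e u v : cg T u v -> cg (T + e) ('X^e * u) ('X^e * v).
Proof. by case=> r ->; exists r; rewrite mulrDr mulrA -exprD addnC. Qed.

Lemma cg_unshift T e u v : cg (T + e) ('X^e * u) ('X^e * v) -> cg T u v.
Proof.
case=> r h; exists r; apply: (mulfI (x := 'X^e)); first by rewrite monic_neq0 // monicXn.
by rewrite h mulrDr mulrA -exprD addnC.
Qed.

Lemma cg_inv1 T e : (0 < e)%N -> exists Q : P, cg T ((1 - 'X^e) * Q) 1.
Proof.
move=> e0; exists (\sum_(i < T) 'X^e ^+ i).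
have -> : (1 - 'X^e) * \sum_(i < T) ('X^e : P) ^+ i = - ('X^e ^+ T - 1).
  by rewrite subrX1; ring.
rewrite opprB -exprM; apply: cg_trans (cgD (cg_refl _ 1) (cgN (cgX0 _))) _.
  by rewrite mulnC leq_pmulr.
by rewrite oppr0 addr0; exact: cg_refl.
Qed.

Lemma cg_inv_prod T m (e : nat -> nat) : (forall i, (0 < e i)%N) ->
  exists Q : P, cg T ((\prod_(0 <= i < m) (1 - 'X^(e i))) * Q) 1.
Proof.
move=> he; elim: m => [|m [Q hQ]]; first by exists 1; rewrite big_geq // mulr1; exact: cg_refl.
have [Q' hQ'] := cg_inv1 T (he m).
exists (Q * Q'); rewrite big_nat_recr //=.
have := cgM hQ hQ'; rewrite mulr1; apply: cg_trans.
by rewrite -!mulrA [X in _ * X]mulrCA; exact: cg_refl.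
Qed.

Lemma cg_cancel T A u v Q : cg T (A * Q) 1 -> cg T (A * u) (A * v) -> cg T u v.
Proof.
move=> hQ h.
have h1 := cgMl Q h.
have e1 : forall w : P, cg T (Q * (A * w)) w.
  move=> w; have := cgM hQ (cg_refl T w); rewrite mul1r.
  by apply: cg_trans; rewrite mulrA [Q * A]mulrC; exact: cg_refl.
exact: cg_trans (cg_sym (e1 u)) (cg_trans h1 (e1 v)).
Qed.

Lemma bin2S n : 'C(n.+1, 2) = ('C(n, 2) + n)%N.
Proof. by rewrite binS bin1 addnC. Qed.

Lemma bin2D m n : 'C(m + n, 2) = ('C(m, 2) + m * n + 'C(n, 2))%N.
Proof.
elim: n => [|n IH]; first by rewrite addn0 muln0 addn0 bin0n addn0.
by rewrite addnS !bin2S IH; lia.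
Qed.

Lemma bin2_2 n : ('C(n, 2) * 2 = n * n.-1)%N.
Proof. elim: n => [|n IH] //; rewrite bin2S mulnDl IH /=; case: n {IH} => //= n; lia. Qed.

Fixpoint gb (q : P) (m j : nat) : P :=
  match m, j with
  | _, 0 => 1
  | 0, _.+1 => 0
  | m'.+1, j'.+1 => gb q m' j' + q ^+ j'.+1 * gb q m' j'.+1
  end.

Lemma gb0 q m : gb q m 0 = 1.
Proof. by case: m. Qed.

Lemma gb_small q m j : (m < j)%N -> gb q m j = 0.
Proof.
elim: m j => [|m IH] [|j] //= lt.
by rewrite !IH ?mulr0 ?addr0 // ltnW.
Qed.

Definition qp (q : P) (m : nat) := \prod_(0 <= i < m) (1 - q ^+ i.+1).

Lemma qpS q m : qp q m.+1 = qp q m * (1 - q ^+ m.+1).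
Proof. by rewrite /qp big_nat_recr. Qed.

Lemma gb_prod q m j : (j <= m)%N -> gb q m j * qp q j * qp q (m - j) = qp q m.
Proof.
elim: m j => [|m IH] [|j] //=.
- by move=> _; rewrite /qp !big_geq // !mulr1.
- by move=> _; rewrite subn0 /qp big_geq // !mul1r.
move=> le; rewrite subSS.
have h1 : gb q m j * qp q j.+1 * qp q (m - j) = qp q m * (1 - q ^+ j.+1).
  by rewrite qpS -(IH j le); ring.
have h2 : q ^+ j.+1 * gb q m j.+1 * qp q j.+1 * qp q (m - j) =
          q ^+ j.+1 * qp q m * (1 - q ^+ (m - j)).
  move: le; rewrite leq_eqVlt => /orP[/eqP [->]|lt].
    by rewrite gb_small // subnn expr0 subrr !(mulr0, mul0r).
  have -> : (m - j = (m - j.+1).+1)%N by lia.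
  by rewrite [qp q (m - j.+1).+1]qpS -(IH j.+1 lt); ring.
have e : (q ^+ j.+1 * q ^+ (m - j) = q ^+ m.+1)%R.
  by rewrite -exprD; congr (_ ^+ _); lia.
rewrite mulrDl mulrDl h1 h2 qpS -e; ring.
Qed.

Lemma qbin q m : forall u v : P,
  \prod_(0 <= i < m) (u - v * q ^+ i) =
  \sum_(0 <= j < m.+1) (-1) ^+ j * gb q m j * q ^+ 'C(j, 2) * v ^+ j * u ^+ (m - j).
Proof.
elim: m => [|m IH] u v.
  by rewrite big_geq // big_nat1 /= !(expr0, mulr1).
pose t j := (-1) ^+ j * gb q m.+1 j * q ^+ 'C(j, 2) * v ^+ j * u ^+ (m.+1 - j).
transitivity (\sum_(0 <= j < m.+2) t j); last by [].
rewrite big_nat_recl //.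
under eq_big_nat => i _ do rewrite exprS mulrA.
rewrite IH.
set s := fun j => (-1) ^+ j * gb q m j * q ^+ 'C(j, 2) * (v * q) ^+ j * u ^+ (m - j).
rewrite -/(\sum_(0 <= j < m.+1) s j).
have sm : s m.+1 = 0 by rewrite /s gb_small // !(mulr0, mul0r).
have Hs : \sum_(0 <= j < m.+1) s j.+1 = \sum_(0 <= j < m.+1) s j - s 0.
  have := big_nat_recl m.+1 0 (op := +%R) (idx := 0) s (leq0n _).
  by rewrite big_nat_recr //= sm addr0 => ->; rewrite addrC addKr.
have Ht : \sum_(0 <= j < m.+1) t j.+1 = \sum_(0 <= j < m.+1) (- v * s j + u * s j.+1).
  apply: eq_big_nat => j /andP[_ lj].
  rewrite /s /t /= bin2S !exprS exprD exprMn.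
  move: lj; rewrite ltnS leq_eqVlt => /orP[/eqP ->|lj].
    rewrite (gb_small q (ltnSn m)) !subnn !(mulr0, mul0r, addr0, expr0, mulr1); ring.
  rewrite subSS.
  have -> : (m - j = (m - j.+1).+1)%N by lia.
  rewrite exprS; ring.
rewrite [RHS]big_nat_recl // Ht big_split /= -mulr_sumr -mulr_sumr Hs /s /t /=.
rewrite !(expr0, mulr1, mul1r, subn0, bin0n, gb0) /=.
set S := \sum_(0 <= j < m.+1) _. rewrite exprS; ring.
Qed.

Definition pr (a c N : nat) : P := \prod_(0 <= i < N) (1 - 'X^(c + a * i)).

Lemma sum_lin a b N : (\sum_(0 <= i < N) (b + a * i) = b * N + a * 'C(N, 2))%N.
Proof.
rewrite big_split /= sum_nat_const_nat -bin2_sum big_distrr /= subn0; lia.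
Qed.

Lemma hL1 a b N :
  \prod_(N <= i < N + N) ('X^(a * N) - 'X^b * ('X^a : P) ^+ i) =
  'X^(a * N) ^+ N * pr a b N.
Proof.
have e : ('X^(a * N) : P) ^+ N = \prod_(0 <= i < N) 'X^(a * N) by rewrite prodr_const_nat subn0.
rewrite -{1}[N]add0n big_addn addnK /pr e -big_split /=.
apply: eq_bigr => i _; rewrite -!exprM -!exprD mulrBr mulr1 -exprD.
by congr (_ - 'X^_); lia.
Qed.

Lemma hL2 a b N : (b < a)%N ->
  \prod_(0 <= i < N) ('X^(a * N) - 'X^b * ('X^a : P) ^+ i) =
  (-1) ^+ N * 'X^(b * N + a * 'C(N, 2)) * pr a (a - b) N.
Proof.
move=> ba.
transitivity (\prod_(0 <= i < N)
   ((-1) * 'X^(b + a * i) * (1 - 'X^((a - b) + a * (0 + N - i.+1))) : P)).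
  apply: eq_big_nat => i /andP[_ iN].
  rewrite mulrBr mulr1 -mulrA -exprD -exprM -exprD.
  have -> : (b + a * i + (a - b + a * (0 + N - i.+1)) = a * N)%N.
    rewrite add0n.
    have -> : N = ((N - i.+1) + i.+1)%N by lia.
    rewrite addnK.
    have : (a * (N - i.+1 + i.+1) = a * (N - i.+1) + a * i + a)%N by rewrite mulnDr mulnS; lia.
    lia.
  ring.
rewrite big_split big_split /= prodr_const_nat prodrXr sum_lin subn0.
by rewrite /pr [in RHS]big_nat_rev.
Qed.

Lemma sum_split2 (F : nat -> P) N :
  \sum_(0 <= j < (N + N).+1) F j =
  \sum_(0 <= k < N.+1) F (k + N)%N + \sum_(1 <= k < N.+1) F (N - k)%N.
Proof.
rewrite (big_cat_nat _ (n := N)) //=; last by lia.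
rewrite addrC; congr (_ + _).
  by rewrite -{1}[N]add0n big_addn; congr (\sum_(0 <= k < _) _); lia.
by rewrite big_nat_rev /= add0n big_add1.
Qed.

Lemma sgn_a N k : ((-1) ^+ (k + N)%N * (-1) ^+ N = (-1) ^+ k :> P).
Proof.
by rewrite exprD -mulrA -exprMn mulrNN mulr1 expr1n mulr1.
Qed.

Lemma sgn_b N k : (k <= N)%N -> ((-1) ^+ (N - k)%N * (-1) ^+ N = (-1) ^+ k :> P).
Proof.
move=> kN; rewrite -{2}(subnK kN) exprD mulrA -exprMn mulrNN mulr1 expr1n mul1r //.
Qed.

Lemma sgn_c N k : (k <= N)%N -> ((-1) ^+ (N - k)%N = (-1) ^+ k * (-1) ^+ N :> P).
Proof.
by move=> kN; rewrite -(sgn_b kN) -mulrA -exprMn mulrNN mulr1 expr1n mulr1.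
Qed.

Lemma Xmono (s g : P) a b c e1 e2 e3 E : (a * e1 + b * e2 + c * e3 = E)%N ->
  s * g * ('X^a) ^+ e1 * ('X^b) ^+ e2 * ('X^c) ^+ e3 = s * g * 'X^E.
Proof. by move=> <-; rewrite !exprD !exprM; ring. Qed.

Lemma jtp_fin a b N : (0 < b < a)%N ->
  pr a b N * pr a (a - b) N =
  \sum_(0 <= k < N.+1) (-1) ^+ k * gb ('X^a) (N + N) (k + N) * 'X^(a * 'C(k, 2) + b * k)
  + \sum_(1 <= k < N.+1) (-1) ^+ k * gb ('X^a) (N + N) (N - k) * 'X^(a * 'C(k.+1, 2) - b * k).
Proof.
move=> /andP[b0 ba].
set B := (b * N + a * 'C(N, 2) + a * N * N)%N.
have q := qbin ('X^a) (N + N) ('X^(a * N)) ('X^b).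
rewrite (big_cat_nat _ (n := N)) //= in q; last by lia.
rewrite hL1 hL2 // sum_split2 in q.
have nz : ((-1) ^+ N * 'X^B : P) != 0.
  by rewrite mulf_neq0 ?signr_eq0 // monic_neq0 // monicXn.
apply: (mulfI nz).
have -> : (-1) ^+ N * 'X^B * (pr a b N * pr a (a - b) N) =
   (-1) ^+ N * 'X^(b * N + a * 'C(N, 2)) * pr a (a - b) N * ('X^(a * N) ^+ N * pr a b N).
  by rewrite -exprM /B !exprD; ring.
rewrite q mulrDr !mulr_sumr.
congr (_ + _); apply: eq_big_nat => k /andP[k1 kN].
  rewrite (@Xmono _ _ _ _ _ _ _ _ (B + (a * 'C(k, 2) + b * k))%N); last first.
    have kN' : (k <= N)%N by lia.
    have [M eN] : exists M, (N = M + k)%N by exists (N - k)%N; lia.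
    rewrite /B (_ : (N + N - (k + N) = M)%N); last by lia.
    rewrite bin2D eN; ring.
  by rewrite (exprD 'X) (exprD (-1)); ring.
rewrite (@Xmono _ _ _ _ _ _ _ _ (B + (a * 'C(k.+1, 2) - b * k))%N); last first.
  have kN' : (k <= N)%N by lia.
  have [M eN] : exists M, (N = M + k)%N by exists (N - k)%N; lia.
  have hk : (b * k <= a * 'C(k.+1, 2))%N.
    rewrite bin2S mulnDr; apply: (leq_trans _ (leq_addl (a * 'C(k, 2)) _)).
    by rewrite leq_mul2r ltnW ?orbT.
  rewrite /B (_ : (N + N - (N - k) = N + k)%N); last by lia.
  rewrite (_ : (N - k = M)%N); last by lia.
  rewrite addnBA //; apply/eqP; rewrite eq_sym -(eqn_add2r (b * k)) subnK; last first.
    by apply: leq_trans hk _; apply: leq_addl.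
  rewrite eN bin2D bin2S; apply/eqP.
  have h2 : ('C(k, 2) * 2 + k = k * k)%N by rewrite bin2_2; case: (k) => //= k'; lia.
  have h3 : (a * ('C(k, 2) * 2 + k) = a * (k * k))%N by rewrite h2.
  nia.
by rewrite (exprD 'X) sgn_c; [ring | lia].
Qed.

Lemma qp_pr a m : qp ('X^a) m = pr a a m.
Proof.
by apply: eq_bigr => i _; rewrite -exprM mulnS.
Qed.

Lemma pr_tail a c T N : (0 < a)%N -> (T <= N)%N -> cg T (pr a c N) (pr a c T).
Proof.
move=> a0 TN; apply: cg_tail => // i Ti.
have := cgD (cg_refl T 1) (cgN (@cgX0 T (c + a * i) _)).
rewrite oppr0 addr0; apply.
by apply: (leq_trans Ti); apply: (leq_trans _ (leq_addl c _)); rewrite leq_pmull.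
Qed.

Lemma pr_inv a c T : (0 < c)%N -> exists Q, cg T (pr a c T * Q) 1.
Proof. by move=> c0; apply: cg_inv_prod => i; apply: leq_trans c0 (leq_addr _ _). Qed.

Lemma gb_inv a T N m j : (0 < a)%N -> (T <= N)%N -> (T <= j)%N -> (j <= m)%N ->
  (T <= m - j)%N -> cg T (gb ('X^a) m j * pr a a N) 1.
Proof.
move=> a0 TN Tj jm Tmj.
have [Qi hQ] := pr_inv a T a0.
set Q := pr a a T.
have e := gb_prod ('X^a) jm; rewrite !qp_pr in e.
have h1 : cg T (gb ('X^a) m j * Q * Q) Q.
  have t1 : cg T (pr a a j) Q by exact: pr_tail.
  have t2 : cg T (pr a a (m - j)) Q by exact: pr_tail.
  have t3 : cg T (pr a a m) Q by apply: pr_tail => //; apply: leq_trans Tj jm.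
  apply: cg_trans t3; rewrite -e; apply: cg_sym; apply: cgM t2; apply: cgM t1.
  exact: cg_refl.
have h2 : cg T (gb ('X^a) m j) Qi.
  apply: (@cg_cancel T (Q * Q) _ _ (Qi * Qi)).
    have := cgM hQ hQ; rewrite mulr1; apply: cg_trans.
    by rewrite -!mulrA [Q * (Qi * _)]mulrCA; exact: cg_refl.
  have h4 : cg T (Q * Q * gb ('X^a) m j) Q by rewrite mulrC mulrA; exact: h1.
  apply: cg_trans h4 _.
  apply: cg_sym; have := cgMl Q hQ; rewrite mulr1 mulrA; exact.
have h3 : cg T (pr a a N) Q by exact: pr_tail.
by apply: (cg_trans (cgM h2 h3)); rewrite mulrC.
Qed.

Lemma term_cg T e (s g pq : P) : ((T <= e)%N \/ cg T (g * pq) 1) ->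
  cg T (s * g * 'X^e * pq) (s * 'X^e).
Proof.
case=> [le|h].
  have h0 := cgX0 le.
  apply: cg_trans (_ : cg T (s * g * 0 * pq) _); last by rewrite !(mulr0, mul0r); apply: cg_sym; have := cgMl s h0; rewrite mulr0.
  by apply: cgM (cg_refl _ _); apply: cgMl.
have := cgMl (s * 'X^e) h; rewrite mulr1; apply: cg_trans.
by rewrite -!mulrA; apply: cgMl; rewrite mulrCA; exact: cg_refl.
Qed.

Lemma jtp_cg a b T N : (0 < b < a)%N -> (T + T <= N)%N ->
  cg T (pr a b N * pr a (a - b) N * pr a a N)
   (\sum_(0 <= k < N.+1) (-1) ^+ k * 'X^(a * 'C(k, 2) + b * k)
  + \sum_(1 <= k < N.+1) (-1) ^+ k * 'X^(a * 'C(k.+1, 2) - b * k)).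
Proof.
move=> hab TN; have /andP[b0 ba] := hab.
have a0 : (0 < a)%N by lia.
rewrite jtp_fin // mulrDl !mulr_suml.
apply: cgD; apply: cg_sum => k /andP[k1 kN]; apply: term_cg.
  case: (leqP T k) => Tk; [left | right].
    by apply: leq_trans Tk _; nia.
  apply: gb_inv => //; lia.
case: (leqP T k) => Tk; [left | right].
  apply: leq_trans Tk _.
  have hk : (b * k + k <= a * 'C(k.+1, 2))%N.
    rewrite bin2S mulnDr; apply: (leq_trans _ (leq_addl (a * 'C(k, 2)) _)).
    by rewrite addnC -mulSn leq_mul2r ba orbT.
  lia.
apply: gb_inv => //; lia.
Qed.

Definition Dp (m : nat) : P :=
  \prod_(0 <= i < m) (if good_part i then 1 - 'X^i else 1).

Lemma good5 N r : good_part (5 * N + r)%N = good_part r.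
Proof. by rewrite /good_part mulnC modnMDl. Qed.

Lemma Dp_pr N : pr 5 1 N * pr 5 4 N = Dp (5 * N)%N.
Proof.
elim: N => [|N IH]; first by rewrite /pr /Dp muln0 !big_geq // mulr1.
rewrite /pr !big_nat_recr //= -/(pr 5 1 N) -/(pr 5 4 N).
rewrite /Dp mulnS addnC !big_nat_recr //= -/(Dp (5 * N)) -IH.
rewrite -[(5 * N)%N]addn0 !good5 /= !addn0.
rewrite -(addn4 (5 * N)) -(addn3 (5 * N)) -(addn2 (5 * N)) -(addn1 (5 * N)) !good5 /=.
rewrite [(4 + _)%N]addnC; ring.
Qed.

Lemma pr15 N : pr 15 5 N * pr 15 10 N * pr 15 15 N = pr 5 5 (3 * N)%N.
Proof.
elim: N => [|N IH]; first by rewrite /pr muln0 !big_geq // !mulr1.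
rewrite /pr mulnS !big_nat_recr //= -!/(pr _ _ _).
rewrite [in RHS]/pr -/(pr 5 5 (3 * N)%N) -IH.
have -> : (5 + 5 * (3 * N) = 5 + 15 * N)%N by lia.
have -> : (5 + 5 * (3 * N).+1 = 10 + 15 * N)%N by lia.
have -> : (5 + 5 * (3 * N).+2 = 15 + 15 * N)%N by lia.
ring.
Qed.

Definition Fp n (i j : 'I_n.+1) : P :=
  if (j != ord0) ==> good_part i then 'X^(i * j)%N else 0.

Definition Gf n : P := \prod_(i < n.+1) \sum_(j < n.+1) Fp i j.

Lemma Gf_coef n : (Gf n)`_n = (p145 n)%:Z.
Proof.
rewrite /Gf bigA_distr_bigA /= coef_sum.
pose Q (f : {ffun 'I_n.+1 -> 'I_n.+1}) :=
  (\sum_(i < n.+1) (i : nat) * (f i : nat) == n)%N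
  && [forall i, (f i != ord0) ==> good_part i].
transitivity (\sum_(f : {ffun 'I_n.+1 -> 'I_n.+1}) ((Q f)%:R : int)).
  apply: eq_bigr => f _.
  case: (boolP [forall i, (f i != ord0) ==> good_part i]) => [/forallP H | /forallP H].
    rewrite (eq_bigr (fun i : 'I_n.+1 => 'X^(i * f i)%N)); last by move=> i _; rewrite /Fp H.
    by rewrite prodrXr coefXn /Q (_ : [forall i, _] = true) ?andbT 1?eq_sym //; apply/forallP.
  have [i Hi] : exists i, ~~ ((f i != ord0) ==> good_part i).
    by apply/existsP; rewrite -negb_forall; apply/forallP.
  rewrite (bigD1 i) //= {1}/Fp (negbTE Hi) mul0r coef0 /Q.
  case: (boolP [forall _, _]) => [/forallP /(_ i) Hc | _]; [by rewrite Hc in Hi | by rewrite andbF].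
rewrite (eq_bigr (fun f => if Q f then 1 else 0)); last by move=> f _; case: (Q f).
rewrite -big_mkcond /= sumr_const /p145 /part145_set cardsE.
by rewrite natz.
Qed.

Lemma Gf_eq n : Gf n =
  \prod_(0 <= i < n.+1) (if good_part i then \sum_(j < n.+1) 'X^(i * j)%N else 1).
Proof.
rewrite /Gf big_mkord; apply: eq_bigr => i _; case: (boolP (good_part i)) => g.
  by apply: eq_bigr => j _; rewrite /Fp g implybT.
rewrite big_ord_recl /Fp /= muln0 expr0 big1 ?addr0 // => j _.
by rewrite (negbTE g).
Qed.

Lemma good_pos i : good_part i -> (0 < i)%N.
Proof. by case: i. Qed.

Lemma Gf_D n : cg n.+1 (Gf n * Dp n.+1) 1.
Proof.
rewrite Gf_eq /Dp -big_split /=.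
apply: cg_trans (_ : cg _ _ (\prod_(0 <= i < n.+1) (1 : P))) _; last first.
  by rewrite big1_eq; exact: cg_refl.
apply: cg_prod => i _; case: (boolP (good_part i)) => g; last first.
  by rewrite mulr1; exact: cg_refl.
have -> : (\sum_(j < n.+1) ('X^(i * j)%N : P)) * (1 - 'X^i) = 1 - ('X^i) ^+ n.+1.
  rewrite (eq_bigr (fun j : 'I_n.+1 => ('X^i : P) ^+ j)); last by move=> j _; rewrite exprM.
  by rewrite mulrC -[1 - 'X^i]opprB mulNr -subrX1 opprB.
rewrite -exprM; have := cgD (cg_refl n.+1 1) (cgN (@cgX0 n.+1 (i * n.+1) _)).
rewrite oppr0 addr0; apply.
by rewrite leq_pmull // good_pos.
Qed.

Lemma Dp_tail T m : (T <= m)%N -> cg T (Dp m) (Dp T).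
Proof.
move=> Tm; apply: cg_tail => // i Ti; case: (good_part i); last exact: cg_refl.
have := cgD (cg_refl T 1) (cgN (@cgX0 T i Ti)).
by rewrite oppr0 addr0.
Qed.

Lemma Gf_cmp m n : (m <= n)%N -> cg m.+1 (Gf n) (Gf m).
Proof.
move=> mn.
have h1 : cg m.+1 (Gf n * Dp m.+1) 1.
  have h0 : cg m.+1 (Gf n * Dp n.+1) 1 by apply: (cg_le _ (Gf_D n)).
  apply: cg_trans h0.
  by apply: cgMl; apply: cg_sym; apply: Dp_tail.
have h2 := Gf_D m.
have e1 : cg m.+1 (Gf n) (Gf n * Dp m.+1 * Gf m).
  have t := cgMl (Gf n) (cg_sym h2); rewrite mulr1 in t.
  have -> : Gf n * Dp m.+1 * Gf m = Gf n * (Gf m * Dp m.+1) by ring.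
  exact: t.
apply: cg_trans e1 _.
have t := cgM h1 (cg_refl m.+1 (Gf m)); rewrite mul1r in t; exact: t.
Qed.

Lemma Gf_coefm m n : (m <= n)%N -> (Gf n)`_m = (p145 m)%:Z.
Proof. by move=> mn; rewrite (cg_coef (Gf_cmp mn)) // Gf_coef. Qed.

Section ENat.
Local Open Scope nat_scope.

Lemma bin2_sq k : ('C(k, 2) * 2 + k = k * k)%N.
Proof. by rewrite bin2_2; case: k => //= k; lia. Qed.

Lemma half_eq x y : y = (2 * x)%N -> (y %/ 2 = x)%N.
Proof. by move=> ->; rewrite mulKn. Qed.

Lemma P7E k : (5 * 'C(k, 2) + 1 * k)%N = P7 k.
Proof.
rewrite /P7; apply/esym/half_eq; have := bin2_sq k.
case: k => [|k] //=; nia.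
Qed.

Lemma Q7E k : (5 * 'C(k.+1, 2) - 1 * k)%N = Q7 k.
Proof.
rewrite /Q7; apply/esym/half_eq; have := bin2_sq k; rewrite bin2S; nia.
Qed.

Lemma P5E k : (15 * 'C(k, 2) + 5 * k)%N = (5 * P5 k)%N.
Proof.
rewrite /P5; have := bin2_sq k.
have h : ((k * (3 * k - 1)) %/ 2 = 3 * 'C(k, 2) + k)%N.
  by apply: half_eq; have := bin2_sq k; case: k => [|k] //=; nia.
rewrite h; lia.
Qed.

Lemma Q5E k : (15 * 'C(k.+1, 2) - 5 * k)%N = (5 * Q5 k)%N.
Proof.
rewrite /Q5.
have h : ((k * (3 * k + 1)) %/ 2 = 3 * 'C(k, 2) + 2 * k)%N.
  by apply: half_eq; have := bin2_sq k; nia.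
rewrite h bin2S; lia.
Qed.

Lemma P5_sq k : (2 * P5 k + k = 3 * k * k)%N.
Proof. have := P5E k; have := bin2_sq k; lia. Qed.

Lemma Q5_sq k : (2 * Q5 k = 3 * k * k + k)%N.
Proof. have := Q5E k; have := bin2_sq k; rewrite bin2S; lia. Qed.

Lemma P5_inj a b : P5 a = P5 b -> a = b.
Proof.
move=> e; have := P5_sq a; have := P5_sq b; rewrite e => h1 h2.
case: (ltngtP a b) => // h; nia.
Qed.

Lemma Q5_inj a b : Q5 a = Q5 b -> a = b.
Proof.
move=> e; have := Q5_sq a; have := Q5_sq b; rewrite e => h1 h2.
case: (ltngtP a b) => // h; nia.
Qed.

Lemma PQ5 a b : (0 < b)%N -> P5 a <> Q5 b.
Proof.
move=> b0 e; have := P5_sq a; have := Q5_sq b; rewrite e => h1 h2.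
case: (leqP a b) => h; nia.
Qed.

End ENat.

Lemma P5_ge k : (k <= P5 k)%N.
Proof. have := P5_sq k; nia. Qed.

Lemma Q5_ge k : (k <= Q5 k)%N.
Proof. have := Q5_sq k; nia. Qed.

Lemma sum_one (N m : nat) (F : nat -> int) (c : nat -> bool) :
  (m < N)%N -> (forall k, c k = (k == m)) ->
  \sum_(0 <= k < N) (if c k then F k else 0) = F m.
Proof.
move=> mN hc; rewrite (eq_bigr (fun k => if k == m then F k else 0)); last by move=> k _; rewrite hc.
by rewrite -big_mkcond big_nat1_eq /= mN.
Qed.

Lemma sum_zero (a N : nat) (F : nat -> int) (c : nat -> bool) :
  (forall k, (a <= k)%N -> c k = false) -> \sum_(a <= k < N) (if c k then F k else 0) = 0.
Proof.
move=> hc; rewrite big_nat_cond big1 // => k /andP[/andP[ak _] _]; by rewrite hc.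
Qed.

Lemma M_sum n M N : is_M n M -> (n < N)%N ->
  \sum_(0 <= k < N.+1) (if n == (5 * P5 k)%N then (-1) ^+ k else 0)
  + \sum_(1 <= k < N.+1) (if n == (5 * Q5 k)%N then (-1) ^+ k else 0) = M.
Proof.
move=> [hM1 hM2] nN.
have caseP : forall m, n = (5 * P5 m)%N ->
  \sum_(0 <= k < N.+1) (if n == (5 * P5 k)%N then (-1) ^+ k else 0)
  + \sum_(1 <= k < N.+1) (if n == (5 * Q5 k)%N then (-1) ^+ k else 0) = M.
  move=> m hm; rewrite (hM1 m (or_introl hm)) (@sum_one _ m); last first.
  - by move=> k; rewrite hm eqn_mul2l /=; apply/eqP/eqP => [/P5_inj ->|->].
  - by have := P5_ge m; lia.
  rewrite (@sum_zero 1) ?addr0 // => k k1; apply/negbTE; rewrite hm eqn_mul2l /=.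
  by apply/eqP; apply: PQ5.
case: (boolP [exists m : 'I_n.+1, (n == 5 * P5 m)%N || (n == 5 * Q5 m)%N]).
  case/existsP => -[m mlt] /= /orP[/eqP hm | /eqP hm]; first exact: (caseP m).
  case: (posnP m) => m0.
    by apply: (caseP 0%N); rewrite hm m0.
  rewrite (hM1 m (or_intror hm)).
  rewrite (@sum_zero 0); last first.
    move=> k _; apply/negbTE; rewrite hm eqn_mul2l /=; apply/eqP => e.
    by apply: (PQ5 m0); rewrite e.
  rewrite add0r (@big_add1 _ _ _ 0 N.+1) /= (@sum_one _ m.-1); last first.
  - move=> k; rewrite hm eqn_mul2l /=; apply/eqP/eqP => [/Q5_inj|->]; first lia.
    by rewrite prednK.
  - by have := Q5_ge m; lia.
  by rewrite prednK.
rewrite negb_exists => /forallP hn.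
have hn' : ~ (exists m : nat, n = (5 * P5 m)%N \/ n = (5 * Q5 m)%N).
  case=> m hm; have mn : (m < n.+1)%N.
    by case: hm => ->; [have := P5_ge m | have := Q5_ge m]; lia.
  have := hn (Ordinal mn); rewrite /=; case: hm => ->; rewrite eqxx ?orbT //.
rewrite (hM2 hn') (@sum_zero 0) ?(@sum_zero 1) ?addr0 // => k _; apply/negbTE/eqP => e;
  apply: hn'; exists k; [right | left]; exact: e.
Qed.

Lemma pz_sub n e : p145z (n%:Z - e%:Z) = if (e <= n)%N then (p145 (n - e))%:Z else 0.
Proof.
case: leqP => h; first by rewrite subzn.
have -> : n%:Z - e%:Z = Negz (e - n).-1.
  by rewrite NegzE prednK ?subn_gt0 // -subzn ?opprB // ltnW.
by [].
Qed.

Lemma sgnP k : ((-1) ^+ k : P) = ((-1) ^+ k)%:P.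
Proof. by rewrite rmorphXn rmorphN1. Qed.

Lemma coef_term (G : P) n k e :
  (G * ((-1) ^+ k * 'X^e))`_n = (-1) ^+ k * (if (n < e)%N then 0 else G`_(n - e)).
Proof. by rewrite mulrCA sgnP coefCM coefMXn. Qed.

Lemma coef_term1 n k e :
  ((-1) ^+ k * 'X^e : P)`_n = if n == e then (-1) ^+ k else 0.
Proof. by rewrite sgnP coefCM coefXn; case: (n == e); rewrite ?mulr1 ?mulr0. Qed.

Lemma main_id n M : is_M n M ->
  \sum_(0 <= k < (n.+1 + n.+1).+1) (-1) ^+ k * p145z (n%:Z - (P7 k)%:Z)
  + \sum_(1 <= k < (n.+1 + n.+1).+1) (-1) ^+ k * p145z (n%:Z - (Q7 k)%:Z) = M.
Proof.
move=> hM.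
set T := n.+1; set N := (T + T)%N.
have j1 := @jtp_cg 5 1 T N isT (leqnn _).
have j2 := @jtp_cg 15 5 T N isT (leqnn _).
rewrite (_ : (5 - 1 = 4)%N) // in j1; rewrite (_ : (15 - 5 = 10)%N) // in j2.
set A := _ + _ in j1; set E := _ + _ in j2.
have c1 : cg T (Gf n * A) (pr 5 5 N).
  apply: cg_trans (cgMl (Gf n) (cg_sym j1)) _.
  rewrite Dp_pr.
  have t1 : cg T (Dp (5 * N)) (Dp T) by apply: Dp_tail; rewrite /N; lia.
  have t2 := cgM (cgM (cg_refl T (Gf n)) t1) (cg_refl T (pr 5 5 N)).
  rewrite mulrA; apply: cg_trans t2 _.
  have := cgM (Gf_D n) (cg_refl T (pr 5 5 N)); rewrite mul1r; exact.
have c2 : cg T (pr 5 5 N) E.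
  have t1 : cg T (pr 5 5 N) (pr 5 5 T) by apply: pr_tail => //; rewrite /N; lia.
  have t2 : cg T (pr 5 5 (3 * N)) (pr 5 5 T) by apply: pr_tail => //; rewrite /N; lia.
  apply: cg_trans t1 (cg_trans (cg_sym t2) _).
  by rewrite -pr15.
have := cg_coef (cg_trans c1 c2) (ltnSn n).
rewrite /A /E mulrDr !coefD !mulr_sumr !coef_sum.
have L1 : \sum_(0 <= k < N.+1) (Gf n * ((-1) ^+ k * 'X^(5 * 'C(k, 2) + 1 * k)))`_n
   = \sum_(0 <= k < N.+1) (-1) ^+ k * p145z (n%:Z - (P7 k)%:Z).
  apply: eq_bigr => k _; rewrite coef_term P7E pz_sub ltnNge.
  by case: leqP => h //=; rewrite ?mulr0 // Gf_coefm ?leq_subr.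
have L2 : \sum_(1 <= k < N.+1) (Gf n * ((-1) ^+ k * 'X^(5 * 'C(k.+1, 2) - 1 * k)))`_n
   = \sum_(1 <= k < N.+1) (-1) ^+ k * p145z (n%:Z - (Q7 k)%:Z).
  apply: eq_bigr => k _; rewrite coef_term Q7E pz_sub ltnNge.
  by case: leqP => h //=; rewrite ?mulr0 // Gf_coefm ?leq_subr.
have R1 : \sum_(0 <= k < N.+1) ((-1) ^+ k * 'X^(15 * 'C(k, 2) + 5 * k) : P)`_n
   = \sum_(0 <= k < N.+1) (if n == (5 * P5 k)%N then (-1) ^+ k else 0).
  by apply: eq_bigr => k _; rewrite coef_term1 P5E.
have R2 : \sum_(1 <= k < N.+1) ((-1) ^+ k * 'X^(15 * 'C(k.+1, 2) - 5 * k) : P)`_n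
   = \sum_(1 <= k < N.+1) (if n == (5 * Q5 k)%N then (-1) ^+ k else 0).
  by apply: eq_bigr => k _; rewrite coef_term1 Q5E.
rewrite L1 L2 R1 R2 => ->; apply: M_sum => //; rewrite /N; lia.
Qed.

Lemma P7_ge k : (k <= P7 k)%N.
Proof. rewrite -P7E; lia. Qed.

Lemma Q7_ge k : (k <= Q7 k)%N.
Proof. rewrite -Q7E bin2S; lia. Qed.


Unset Implicit Arguments. Set Strict Implicit. Set Printing Implicit Defensive.

Theorem theorem2p3 (n : nat) (M : int) :
  is_M n M ->
  exists K : nat, forall N : nat, (K <= N)%N ->
    p145z n%:Z =
      M + \sum_(1 <= k < N.+1)
            (-1) ^+ k.+1 * (p145z (n%:Z - (P7 k)%:Z) + p145z (n%:Z - (Q7 k)%:Z)).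
Proof.
move=> hM; exists n => Nu hNu.
have h := main_id hM.
set g := fun k => (-1) ^+ k * (p145z (n%:Z - (P7 k)%:Z) + p145z (n%:Z - (Q7 k)%:Z)).
have trunc : forall N1, (n <= N1)%N -> \sum_(1 <= k < N1.+1) g k = \sum_(1 <= k < n.+1) g k.
  move=> N1 nN1; rewrite (big_cat_nat _ (n := n.+1)) //=.
  rewrite [X in _ + X]big_nat_cond [X in _ + X]big1 ?addr0 //.
  move=> k /andP[/andP[nk _] _]; rewrite /g !pz_sub.
  have h1 := P7_ge k; have h2 := Q7_ge k.
  have -> : (P7 k <= n)%N = false by apply/negbTE; rewrite -ltnNge; lia.
  have -> : (Q7 k <= n)%N = false by apply/negbTE; rewrite -ltnNge; lia.
  by rewrite addr0 mulr0.
rewrite big_nat_recl // in h.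
have e := @big_add1 int 0 +%R 0 (n.+1 + n.+1).+1 xpredT
   (fun k => (-1) ^+ k * p145z (n%:Z - (P7 k)%:Z)).
rewrite /= in e; rewrite -e in h.
rewrite -addrA -big_split /= in h.
rewrite (eq_bigr (fun k => - g k)); last first.
  by move=> k _; rewrite /g exprS mulN1r mulNr.
rewrite sumrN trunc // -(trunc (n.+1 + n.+1)%N); last by lia.
rewrite (eq_bigr g) in h; last by move=> k _; rewrite /g mulrDr.
rewrite -h expr0 mul1r addn0 addrK.
by [].
Qed.
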